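(* Let $X\subset\overline{\mathbb{R}}$ and $Y\subset[0,1]$ be finite sets with $|Y|\le|X|+1$ and $\{0,1\}\subset Y$. Let $\mathcal{F}(X,Y)$ be the set of cumulative distribution functions with atoms in $X$ and cumulative probabilities in $Y$, i.e. nondecreasing maps $F:X\to Y$ with $F(\max X)=1$ (where $F$ corresponds to the distribution assigning probability $F(x_i)-F(x_{i-1})$ to $x_i$, with $X=\{x_1<\cdots<x_{|X|}\}$ and $F(x_0):=0$). For $F\in\mathcal{F}(X,Y)$, let $H(F)$ be the Shannon entropy of this distribution. Then $F\in\arg\max_{F'\in\mathcal{F}(X,Y)}H(F')$ if and only if $F(X)\cup\{0\}=Y$.
   Context: $\overline{\mathbb{R}}=\mathbb{R}\cup\{-\infty,+\infty,\bot\}$ with the strict linear order $-\infty<x<x'<+\infty<\bot$ for reals $x<x'$. Shannon entropy of a discrete distribution $(p_i)$ is $-\sum_i p_i\log_2 p_i$ (with $0\log_2 0=0$). *)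

(* Defs.v *)
From mathcomp Require Import all_boot all_order all_algebra.
From mathcomp Require Import reals ereal exp.
Set Implicit Arguments. Unset Strict Implicit. Unset Printing Implicit Defensive.
Import Order.TTheory GRing.Theory Num.Theory.
Local Open Scope ring_scope.

(* \overline{R} = R ∪ {-oo, +oo, ⊥}: an extended real (\bar R) or None = ⊥. *)
Definition xbar (R : realType) := option (\bar R).

Definition xlt (R : realType) (a b : xbar R) : bool :=
  match a, b with
  | Some x, Some y => (x < y)%E
  | Some _, None => true
  | None, _ => false
  end.

(* A finite set X ⊂ \overline{R} is represented by its increasing enumeration
   x_1 < ... < x_|X|  (sorted xlt X). *)

Definition is_cdf (R : realType) (X : seq (xbar R)) (Y : seq R)
    (F : xbar R -> R) : Prop :=
  [/\ forall x, x \in X -> F x \in Y,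
      forall x y, x \in X -> y \in X -> xlt x y -> F x <= F y
    & F (last None X) = 1].

Definition atom_prob (R : realType) (X : seq (xbar R)) (F : xbar R -> R)
    (i : nat) : R :=
  F (nth None X i) - (if i is j.+1 then F (nth None X j) else 0).

Definition plog2p (R : realType) (p : R) : R :=
  if p == 0 then 0 else p * (ln p / ln 2).

Definition entropy (R : realType) (X : seq (xbar R)) (F : xbar R -> R) : R :=
  - \sum_(i < size X) plog2p (atom_prob X F i).

Definition is_argmax_entropy (R : realType) (X : seq (xbar R)) (Y : seq R)
    (F : xbar R -> R) : Prop :=
  is_cdf X Y F /\ forall F', is_cdf X Y F' -> entropy X F' <= entropy X F.

(* Main.v *)
Require Import Defs.
From mathcomp Require Import all_boot all_order all_algebra.
From mathcomp Require Import reals ereal exp.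
From mathcomp Require Import ring lra.
Import Order.TTheory GRing.Theory Num.Theory.
Local Open Scope ring_scope.

Section Aux.
Context {R : realType}.

Fixpoint Pl (a : R) (l : seq R) : R :=
  if l is b :: l' then plog2p (b - a) + Pl b l' else 0.

Fixpoint ins (y : R) (l : seq R) : seq R :=
  if l is b :: l' then (if y <= b then y :: l else b :: ins y l') else [:: y].

Fixpoint dd (a : R) (l : seq R) : seq R :=
  if l is b :: l' then (if b == a then dd a l' else b :: dd b l') else [::].

Lemma plog2p0 : plog2p (0 : R) = 0.
Proof. by rewrite /plog2p eqxx. Qed.

Lemma plog2p_super (p q : R) : 0 < p -> 0 < q ->
  plog2p p + plog2p q < plog2p (p + q).
Proof.
move=> hp hq.
have hpq : 0 < p + q by rewrite addr_gt0.
rewrite /plog2p (gt_eqF hp) (gt_eqF hq) (gt_eqF hpq).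
have l2 : 0 < ln (2 : R) by apply: ln_gt0; rewrite ltr1n.
rewrite !mulrA -mulrDl ltr_pM2r ?invr_gt0 //.
have h1 : ln p < ln (p + q) by rewrite ltr_ln ?posrE // ltrDl.
have h2 : ln q < ln (p + q) by rewrite ltr_ln ?posrE // ltrDr.
rewrite mulrDl ltrD // ltr_pM2l //.
Qed.

Lemma plog2p_refine (a y b : R) : a <= y -> y <= b ->
  plog2p (y - a) + plog2p (b - y) <= plog2p (b - a).
Proof.
move=> hay hyb.
have -> : b - a = (y - a) + (b - y) by ring.
rewrite le_eqVlt in hay; case/orP: hay => [/eqP->|hay].
  by rewrite subrr plog2p0 !add0r.
rewrite le_eqVlt in hyb; case/orP: hyb => [/eqP->|hyb].
  by rewrite subrr plog2p0 !addr0.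
by apply/ltW/plog2p_super; rewrite subr_gt0.
Qed.

Lemma mem_ins y l x : (x \in ins y l) = (x == y) || (x \in l).
Proof.
elim: l => [|b l IH] /=; first by rewrite in_cons orbF.
case: ifP => _; first by rewrite in_cons.
by rewrite !in_cons IH orbCA.
Qed.

Lemma sorted_ins y l a : sorted <=%R (a :: l) -> a <= y ->
  sorted <=%R (a :: ins y l).
Proof.
elim: l a => [|b l IH] a /=; first by move=> _ ->.
case/andP=> hab hl hay; case: ifP => hyb /=.
  by rewrite hay hyb.
rewrite hab /=; apply: IH => //; by apply: ltW; rewrite ltNge hyb.
Qed.

Lemma last_ins y l a : sorted <=%R (a :: l) -> a <= y -> y <= last a l ->
  last a (ins y l) = last a l.
Proof.
elim: l a => [|b l IH] a /=.
  by move=> _ h1 h2; apply/eqP; rewrite eq_le h1 h2.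
case/andP=> hab hl hay hyl; case: ifP => hyb //=.
apply: IH => //; by apply: ltW; rewrite ltNge hyb.
Qed.

Lemma ins_strict y l a : sorted <=%R (a :: l) -> a <= y -> y <= last a l ->
  y \notin a :: l -> Pl a (ins y l) < Pl a l.
Proof.
elim: l a => [|b l IH] a /=.
  move=> _ h1 h2; have -> : y = a by apply/eqP; rewrite eq_le h1 h2.
  by rewrite mem_head.
case/andP=> hab hl hay hyl; rewrite !in_cons negb_or negb_or.
case/and3P=> hya hyb hyl'.
case: ifP => hyb' /=.
  rewrite addrA ltrD2r.
  have -> : b - a = (y - a) + (b - y) by ring.
  apply: plog2p_super; rewrite subr_gt0 lt_neqAle ?hay ?hyb' ?andbT //.
  all: try by rewrite eq_sym.
rewrite ltrD2l; apply: IH => //.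
  by apply: ltW; rewrite ltNge hyb'.
by rewrite in_cons negb_or hyb.
Qed.

Lemma Pl_dd a l : Pl a (dd a l) = Pl a l.
Proof.
elim: l a => [|b l IH] a //=; case: ifP => [/eqP->|_] /=.
  by rewrite IH subrr plog2p0 add0r.
by rewrite IH.
Qed.

Lemma sorted_dd a l : sorted <=%R (a :: l) -> sorted <%R (a :: dd a l).
Proof.
elim: l a => [|b l IH] a //=; case/andP=> hab hl; case: ifP => [/eqP hba|hba] /=.
  by apply: IH; rewrite -hba.
by rewrite lt_neqAle eq_sym hba hab /=; apply: IH.
Qed.

Lemma mem_dd a l x : (x \in a :: dd a l) = (x \in a :: l).
Proof.
elim: l a => [|b l IH] a //=; case: ifP => [/eqP->|_].
  by rewrite IH !in_cons orbA orbb.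
by rewrite in_cons IH (in_cons a).
Qed.

Lemma sub_dd a l : {subset dd a l <= l}.
Proof.
elim: l a => [|b l IH] a //= x; case: ifP => _.
  by move/IH; rewrite in_cons orbC => ->.
by rewrite !in_cons => /orP [->//|/IH ->]; rewrite orbT.
Qed.

Lemma last_dd a l : last a (dd a l) = last a l.
Proof.
elim: l a => [|b l IH] a //=; case: ifP => [/eqP->|_] //=.
Qed.

Lemma Pl_set a l1 l2 : sorted <=%R (a :: l1) -> sorted <=%R (a :: l2) ->
  (a :: l1) =i (a :: l2) -> Pl a l1 = Pl a l2.
Proof.
move=> s1 s2 e.
rewrite -Pl_dd -(Pl_dd a l2).
have : a :: dd a l1 = a :: dd a l2.
  apply: (irr_sorted_eq lt_trans ltxx); try exact: sorted_dd.
  by move=> x; rewrite !mem_dd e.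
by case=> ->.
Qed.

Lemma ins_le y l a : sorted <=%R (a :: l) -> a <= y -> y <= last a l ->
  Pl a (ins y l) <= Pl a l.
Proof.
move=> s h1 h2; case hy: (y \in a :: l); last first.
  by apply/ltW/ins_strict => //; rewrite hy.
rewrite le_eqVlt; apply/orP; left; apply/eqP; apply: Pl_set => //.
  exact: sorted_ins.
move=> x; rewrite !in_cons mem_ins.
have [->|] := eqVneq x y; last by [].
by rewrite -in_cons hy orbT.
Qed.

Lemma Pl_cat a s1 s2 : Pl a (s1 ++ s2) = Pl a s1 + Pl (last a s1) s2.
Proof. by elim: s1 a => [|b s IH] a /=; rewrite ?add0r // IH addrA. Qed.

Lemma Pl_nseq c k : Pl c (nseq k c) = 0.
Proof. by elim: k => //= k ->; rewrite subrr plog2p0 addr0. Qed.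

Lemma Q_sum (s : seq R) a :
  \sum_(i < size s) plog2p (nth 0 s i - (if nat_of_ord i is j.+1 then nth 0 s j else a))
  = Pl a s.
Proof.
elim: s a => [|b s IH] a /=; first by rewrite big_ord0.
rewrite big_ord_recl /= -IH; congr (_ + _).
by apply: eq_bigr => i _; rewrite add0n; case: i => -[|j] .
Qed.

Lemma entropyE (X : seq (xbar R)) G : entropy X G = - Pl 0 (map G X).
Proof.
have := Q_sum (map G X) 0; rewrite size_map => <-.
rewrite /entropy; congr (- _); apply: eq_bigr => -[[|j] hi] /=;
  rewrite /atom_prob (nth_map None) //.
by rewrite (nth_map None) // ltnW.
Qed.

Lemma xlt_trans : transitive (@xlt R).
Proof.
move=> y x z; case: x => [x|]; case: y => [y|]; case: z => [z|] //=.
exact: lt_trans.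
Qed.

Lemma xlt_irr : irreflexive (@xlt R).
Proof. by case=> //= x; exact: ltxx. Qed.

Lemma last_mapG (X : seq (xbar R)) (G : xbar R -> R) : X != [::] ->
  last 0 (map G X) = G (last None X).
Proof. by case: X => // x0 X' _ /=; rewrite last_map. Qed.

End Aux.

Theorem theoremD2 (R : realType) (X : seq (xbar R)) (Y : seq R)
  (hX : sorted (@xlt R) X)
  (hYuniq : uniq Y)
  (hY01 : forall y, y \in Y -> 0 <= y <= 1)
  (hY0 : 0 \in Y) (hY1 : 1 \in Y)
  (hsize : (size Y <= size X + 1)%N)
  (F : xbar R -> R) (hF : is_cdf X Y F) :
  is_argmax_entropy X Y F <-> (0 :: [seq F x | x <- X]) =i Y.
Proof.
have hXn : X != [::].
  apply/eqP => X0; move: hsize; rewrite X0 /=.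
  clear -hY0 hY1; case: Y hY0 hY1 => [|y0 [|y1 Y']] //=.
  by rewrite !inE => /eqP <-; rewrite oner_eq0.
have hXu : uniq X := sorted_uniq (@xlt_trans R) (@xlt_irr R) hX.
have cdfP : forall G, is_cdf X Y G ->
    [/\ sorted <=%R (0 :: map G X), last 0 (map G X) = 1 & {subset map G X <= Y}].
  move=> G [hin hmono hlast]; split.
  - clear -hX hXn hin hmono hY01; case: X hX hXn hin hmono => // x0 X' hX _ hin hmono /=.
    rewrite (andP (hY01 _ (hin _ (mem_head _ _)))).1 /=.
    change (sorted <=%R (map G (x0 :: X'))).
    apply: (homo_sorted_in (P := mem (x0 :: X')) (e := @xlt R)) => //.
    by apply/allP => x hx.
  - by rewrite (@last_mapG R X G hXn).
  - by move=> y /mapP [x hx ->]; apply: hin.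
have idx : forall x y, x \in X -> y \in X -> xlt x y -> (index x X < index y X)%N.
  move=> x y hx hy hxy; rewrite ltnNge; apply/negP => hle.
  rewrite leq_eqVlt in hle; case/orP: hle => [/eqP e|hlt].
    have : x = y by rewrite -(nth_index None hx) -(nth_index None hy) e.
    by move=> exy; move: hxy; rewrite exy xlt_irr.
  have hyx : xlt y x by apply: (sorted_ltn_index (@xlt_trans R) hX) => //.
  by move: (@xlt_trans R y x x hxy hyx); rewrite xlt_irr.
split.
- case=> _ hmax z; apply/idP/idP.
    rewrite in_cons => /orP [/eqP->//|/mapP [x hx ->]].
    by case: hF => hin _ _; apply: hin.
  move=> hz; apply/negPn/negP => hzn.
  set v := map F X.
  have [sv lv subv] := cdfP F hF.
  have [hz0 hz1] := andP (hY01 z hz).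
  set u := dd 0 (ins z v).
  have su : sorted <%R (0 :: u) by apply/sorted_dd/sorted_ins.
  have lu : last 0 u = 1 by rewrite last_dd last_ins // lv.
  have subu : {subset u <= Y}.
    by move=> x /sub_dd; rewrite mem_ins => /orP [/eqP->//|/subv].
  have szu : (size u <= size X)%N.
    have : (size ((0%R:R) :: u) <= size Y)%N.
      apply: uniq_leq_size; first by apply: (sorted_uniq _ _ su); first [exact: lt_trans | exact: ltxx].
      by move=> x; rewrite in_cons => /orP [/eqP->//|/subu].
    by move=> h; have := leq_trans h hsize; rewrite /= addn1 ltnS.
  have Pu : Pl 0 u < Pl 0 v by rewrite Pl_dd; apply: ins_strict => //; rewrite lv.
  set w := u ++ nseq (size X - size u) 1.
  have szw : size w = size X by rewrite size_cat size_nseq subnKC.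
  have sw0 : sorted <=%R (0 :: w).
    rewrite /= cat_path (sub_path _ su); last by move=> a b /ltW.
    rewrite lu /=; elim: (size X - size u)%N => //= k ->; by rewrite lexx.
  have sw : sorted <=%R w := path_sorted sw0.
  have lw : last 0 w = 1.
    rewrite last_cat lu; elim: (size X - size u)%N => //.
  have Pw : Pl 0 w = Pl 0 u by rewrite Pl_cat lu Pl_nseq addr0.
  pose G x := nth 0 w (index x X).
  have mapG : map G X = w.
    apply: (@eq_from_nth _ 0); rewrite size_map ?szw // => i hi.
    by rewrite (nth_map None) // /G index_uniq.
  have wY : {subset w <= Y}.
    by move=> x; rewrite mem_cat => /orP [/subu//|/nseqP [->]].
  have cdfG : is_cdf X Y G.
    split.
    - by move=> x hx; apply/wY/mem_nth; rewrite szw index_mem.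
    - move=> x y hx hy hxy; apply: (sorted_leq_nth le_trans lexx) => //.
      + by rewrite inE szw index_mem.
      + by rewrite inE szw index_mem.
      + exact/ltnW/idx.
    - by rewrite -last_mapG // mapG.
  have := hmax G cdfG; rewrite !entropyE mapG Pw lerN2 => h.
  by move: (lt_le_trans Pu h); rewrite ltxx.
- move=> hS; split => // F' hF'.
  rewrite !entropyE lerN2.
  have [sv lv subv] := cdfP F hF.
  have [sv' lv' subv'] := cdfP F' hF'.
  set v' := map F' X.
  have fold : forall ys, {subset ys <= Y} ->
      [/\ sorted <=%R (0 :: foldr (@ins R) v' ys), last 0 (foldr (@ins R) v' ys) = 1,
          Pl 0 (foldr (@ins R) v' ys) <= Pl 0 v'
        & forall x, (x \in foldr (@ins R) v' ys) = (x \in ys) || (x \in v')].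
    elim=> [|y ys IH] hys /=; first by split.
    have [s1 l1 P1 m1] := IH (fun x hx => hys x ltac:(by rewrite in_cons hx orbT)).
    have [hy0 hy1] := andP (hY01 y (hys y (mem_head _ _))).
    split.
    - exact: sorted_ins.
    - by rewrite last_ins // l1.
    - by apply: le_trans P1; apply: ins_le => //; rewrite l1.
    - by move=> x; rewrite mem_ins m1 in_cons orbA.
  have [s1 l1 P1 m1] := fold Y (fun x hx => hx).
  rewrite (@Pl_set R 0 (map F X) (foldr (@ins R) v' Y) sv s1) //.
  move=> x; rewrite hS in_cons m1.
  have [->|hx0] := eqVneq x 0; first by rewrite hY0.
  rewrite /=; case hx: (x \in Y) => //=.
  by apply/esym/negbTE/negP => /subv'; rewrite hx.
Qed.
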